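(* Let $q$ be a prime power, $m\ge2$, $s,\ell,r_1,\dots,r_m\ge1$ integers, $k=m\ell-s$ with $k\ge\ell$, $n=\sum_{i=1}^m(\ell+r_i)$. Consider the matrix $G(x,y)$ with entries in the polynomial ring $\mathbb{F}_q[x_{w,z},y_{t,i,j}]$ ($1\le w\le k$, $1\le z\le s$, $1\le t\le\ell$, $1\le i\le m$, $1\le j\le r_i$) given by $G(x,y)=(C_1\mid D_1\mid\dots\mid C_m\mid D_m)$, where $(C_1\mid\dots\mid C_m)=[I_k\mid A]$ with $A=(x_{w,z})$ a $k\times s$ matrix of variables, each $C_i$ has $\ell$ columns, and $D_i$ has $r_i$ columns, the $j$-th being $\sum_{t=1}^{\ell}y_{t,i,j}C_i^{(t)}$ with $C_i^{(t)}$ the $t$-th column of $C_i$. Call the $i$-th block of $G(x,y)$ the columns of $(C_i\mid D_i)$. Let $\mathcal T_{k,\ell}(G)$ be the set of $k\times k$ submatrices of $G(x,y)$ having at most $\ell$ columns in each block, and let $p(x,y)=\mathrm{lcm}\{\det S\mid S\in\mathcal T_{k,\ell}(G)\}$. Then the total degree of $p$ satisfies $$\deg p(x,y)\le 2(n-k)\binom{n-1}{k-1}.$$ *)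

(* Defs.v *)
From HB Require Import structures.
From mathcomp Require Import all_boot all_algebra.
From mathcomp Require Import mpoly.

Set Implicit Arguments.
Unset Strict Implicit.
Unset Printing Implicit Defensive.

Import GRing.Theory.
Local Open Scope ring_scope.

Section Lemma19Defs.
Variables (F : finFieldType) (k s l m : nat) (r : 'I_m -> nat).

Definition yidx := {p : 'I_l * 'I_m & 'I_(r p.2)}.
Definition varT := (('I_k * 'I_s) + yidx)%type.

Definition nvars := #|{: varT}|.
Definition Pring := {mpoly F[nvars]}.

Definition var (v : varT) : Pring := 'X_(enum_rank v).
Definition xv (w : 'I_k) (z : 'I_s) : Pring := var (inl (w, z)).
Definition yv (t : 'I_l) (i : 'I_m) (j : 'I_(r i)) : Pring :=
  var (inr (existT (fun p : 'I_l * 'I_m => 'I_(r p.2)) (t, i) j)).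

(* entry (w, g) of [I_k | A], columns numbered g = 0 .. k+s-1 *)
Definition Centry (w : 'I_k) (g : nat) : Pring :=
  if (g < k)%N then ((w : nat) == g)%:R
  else match insub (g - k)%N : option 'I_s with
       | Some z => xv w z
       | None => 0
       end.

(* columns of G: block i has l + r_i columns; column a < l of block i is
   C_i^(a) = column i*l + a of [I_k | A]; column l + j is the j-th column
   of D_i, i.e. sum_t y_{t,i,j} C_i^(t). *)
Definition colT := {i : 'I_m & 'I_(l + r i)}.

Definition Gentry (w : 'I_k) (c : colT) : Pring :=
  let i := tag c in
  let a := tagged c in
  if (a < l)%N then Centry w (i * l + a)
  else match insub (a - l)%N : option 'I_(r i) with
       | Some j => \sum_(t < l) yv t j * Centry w (i * l + t)
       | None => 0
       end.

(* determinants of the k x k submatrices with at most l columns in each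
   block (columns selected by an injective f, possibly reordered, which only
   changes the sign of the determinant) *)
Definition Tdet (p : Pring) : Prop :=
  exists f : 'I_k -> colT,
    injective f /\
    (forall i : 'I_m, (#|[pred a | tag (f a) == i]| <= l)%N) /\
    p = \det (\matrix_(w < k, a < k) Gentry w (f a)).

End Lemma19Defs.

Definition rdvd (R : comRingType) (a b : R) : Prop := exists c : R, b = a * c.

Definition is_lcm (R : comRingType) (S : R -> Prop) (p : R) : Prop :=
  (forall a, S a -> rdvd a p) /\
  (forall b, (forall a, S a -> rdvd a b) -> rdvd p b).

Definition tdeg (n : nat) (R : nzRingType) (p : {mpoly R[n]}) : nat := (msize p).-1.

(* Main.v *)
Set Warnings "-notation-overridden,-ambiguous-paths,-notation-incompatible-prefix,-deprecated".
Require Import Defs.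
From HB Require Import structures.
From mathcomp Require Import all_boot all_algebra.
From mathcomp Require Import mpoly.
Set Implicit Arguments. Unset Strict Implicit. Unset Printing Implicit Defensive.
Import GRing.Theory.
Local Open Scope ring_scope.
Section Tdeg.
Context (n : nat) (R : idomainType).
Implicit Types p q : {mpoly R[n]}.

Lemma tdeg_leE p b : (tdeg p <= b)%N = (msize p <= b.+1)%N.
Proof. by rewrite /tdeg; case: (msize p). Qed.

Lemma tdeg0 : tdeg (0 : {mpoly R[n]}) = 0%N.
Proof. by rewrite /tdeg msize0. Qed.

Lemma tdeg1 : tdeg (1 : {mpoly R[n]}) = 0%N.
Proof. by rewrite /tdeg msize1. Qed.

Lemma msize_gt0 p : p != 0 -> (0 < msize p)%N.
Proof. by rewrite lt0n; have := mmeasure_poly_eq0 (@mdeg n) p => ->. Qed.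

Lemma tdegM p q : p != 0 -> q != 0 -> tdeg (p * q) = (tdeg p + tdeg q)%N.
Proof.
move=> hp hq; rewrite /tdeg msizeM //.
move: (msize_gt0 hp) (msize_gt0 hq); case: (msize p) => // a; case: (msize q) => // b _ _.
by rewrite addSn addnS.
Qed.

Lemma tdegM_le p q : (tdeg (p * q) <= tdeg p + tdeg q)%N.
Proof.
have [->|hp] := eqVneq p 0; first by rewrite mul0r tdeg0.
have [->|hq] := eqVneq q 0; first by rewrite mulr0 tdeg0.
by rewrite tdegM.
Qed.

Lemma tdegD_le p q b : (tdeg p <= b)%N -> (tdeg q <= b)%N -> (tdeg (p + q) <= b)%N.
Proof.
rewrite !tdeg_leE => hp hq; apply: leq_trans (msizeD_le _ _) _.
by rewrite geq_max hp hq.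
Qed.

Lemma tdeg_sum_le (I : Type) (rr : seq I) (P : pred I) (F : I -> {mpoly R[n]}) b :
  (forall i, P i -> (tdeg (F i) <= b)%N) -> (tdeg (\sum_(i <- rr | P i) F i) <= b)%N.
Proof.
move=> h; apply: (big_ind (fun x : {mpoly R[n]} => tdeg x <= b)%N); first by rewrite tdeg0.
  by move=> x y hx hy; apply: tdegD_le.
exact: h.
Qed.

Lemma tdeg_prod_le (I : Type) (rr : seq I) (P : pred I) (F : I -> {mpoly R[n]}) :
  (tdeg (\prod_(i <- rr | P i) F i) <= \sum_(i <- rr | P i) tdeg (F i))%N.
Proof.
elim/big_rec2: _ => [|i x y Pi IH]; first by rewrite tdeg1.
apply: leq_trans (tdegM_le _ _) _; by rewrite leq_add2l.
Qed.

Lemma tdegN p : tdeg (- p) = tdeg p.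
Proof. by rewrite /tdeg; have := mmeasureN (@mdeg n) p => ->. Qed.

Lemma tdeg_sign (b : bool) p : tdeg ((-1) ^+ b * p) = tdeg p.
Proof. by case: b; rewrite ?expr1 ?expr0 ?mulN1r ?mul1r ?tdegN. Qed.

Lemma tdegX i : tdeg ('X_i : {mpoly R[n]}) = 1%N.
Proof. by rewrite /tdeg msizeX mdeg1. Qed.

Lemma tdeg_natbool (b : bool) : tdeg (b%:R : {mpoly R[n]}) = 0%N.
Proof. by case: b; rewrite /= ?mulr1n ?tdeg1 ?tdeg0. Qed.
End Tdeg.
Section Main.
Variables (F : finFieldType) (m s l k : nat) (r : 'I_m -> nat).
Local Notation T := (colT l r).
Local Notation P := (Pring F k s l r).

Definition dcol (c : T) : nat :=
  if (tagged c < l)%N && (tag c * l + tagged c < k)%N then 0%N else 2%N.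

Lemma tdeg_Centry w g : (tdeg (@Centry F k s l m r w g) <= (if (g < k)%N then 0 else 1))%N.
Proof.
rewrite /Centry; case: ifP => hg; first by rewrite tdeg_natbool.
case: insubP => [z _ _|_]; last by rewrite tdeg0.
by rewrite /xv /var tdegX.
Qed.

Lemma tdeg_Centry1 w g : (tdeg (@Centry F k s l m r w g) <= 1)%N.
Proof. by apply: leq_trans (tdeg_Centry w g) _; case: ifP. Qed.

Lemma tdeg_Gentry (w : 'I_k) (c : T) : (tdeg (Gentry F s w c) <= dcol c)%N.
Proof.
rewrite /Gentry /dcol; case: ifP => ha /=.
  by apply: leq_trans (tdeg_Centry w _) _; case: ifP.
case: insubP => [j _ _|_]; last by rewrite tdeg0.
apply: tdeg_sum_le => t _.
apply: leq_trans (tdegM_le _ _) _.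
by rewrite /yv /var tdegX (leq_add (leqnn 1) (tdeg_Centry1 _ _)).
Qed.
Variable c0 : T.

Definition valid (S : {set T}) : bool :=
  [forall i : 'I_m, #|[set c in S | tag c == i]| <= l]%N.

Definition gS (S : {set T}) (a : 'I_k) : T := nth c0 (enum S) a.

Definition MS (S : {set T}) : 'M[P]_k := \matrix_(w < k, a < k) Gentry F s w (gS S a).

Definition Vset : {set {set T}} := [set S : {set T} | (#|S| == k) && valid S].

Lemma gS_inj (S : {set T}) : #|S| = k -> injective (gS S).
Proof.
move=> hS a b; rewrite /gS => /eqP; rewrite nth_uniq ?enum_uniq // -?cardE ?hS //.
by move=> /eqP /val_inj.
Qed.

Lemma gS_in (S : {set T}) a : #|S| = k -> gS S a \in S.
Proof. by move=> hS; rewrite /gS -mem_enum mem_nth // -cardE hS. Qed.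

Lemma sum_gS (S : {set T}) (G : T -> nat) : #|S| = k -> (\sum_(a < k) G (gS S a) = \sum_(c in S) G c)%N.
Proof.
move=> hS; rewrite -[RHS]big_enum /= (big_nth c0).
have -> : size (enum S) = k by rewrite -cardE.
by rewrite big_mkord.
Qed.

Lemma Tdet_gS (S : {set T}) : S \in Vset -> Tdet (\det (MS S)).
Proof.
rewrite inE => /andP [/eqP hS hv]; exists (gS S); split; first exact: gS_inj.
split=> [i|]; last by [].
move/forallP: hv => /(_ i); apply: leq_trans.
rewrite -(card_imset _ (gS_inj hS)); apply: subset_leq_card.
apply/subsetP => c /imsetP [a]; rewrite inE => ha ->.
by rewrite inE gS_in.
Qed.

Lemma tdeg_det (S : {set T}) : #|S| = k -> (tdeg (\det (MS S)) <= \sum_(c in S) dcol c)%N.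
Proof.
move=> hS; apply: tdeg_sum_le => sg _.
rewrite tdeg_sign; apply: leq_trans (tdeg_prod_le _ _ _) _.
rewrite -sum_gS // [X in (_ <= X)%N](reindex_inj (@perm.perm_inj _ sg)) /=.
apply: leq_sum => w _; rewrite mxE. exact: tdeg_Gentry.
Qed.
Lemma Tdet_sign (a : P) : Tdet a ->
  exists2 S, S \in Vset & exists b : bool, a = (-1) ^+ b * \det (MS S).
Proof.
case=> f [finj [fv ->]].
set S := [set f x | x in 'I_k].
have hS : #|S| = k by rewrite card_imset // card_ord.
exists S.
  rewrite inE hS eqxx /=; apply/forallP => i.
  apply: leq_trans (fv i); rewrite -(card_imset _ finj); apply: subset_leq_card.
  apply/subsetP => c; rewrite inE => /andP [/imsetP [x _ ->] hx].
  by apply/imsetP; exists x.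
have hlt : forall x, (index (f x) (enum S) < k)%N.
  by move=> x; rewrite -hS cardE index_mem mem_enum; apply/imsetP; exists x.
pose h x : 'I_k := Ordinal (hlt x).
have hgh : forall x, gS S (h x) = f x.
  by move=> x; rewrite /gS /= nth_index // mem_enum; apply/imsetP; exists x.
have hinj : injective h by move=> x y hxy; apply: finj; rewrite -!hgh hxy.
pose sg : perm.perm_of 'I_k := perm.perm hinj.
have -> : (\matrix_(w, a) Gentry F s w (f a)) = col_perm sg (MS S).
  by apply/matrixP => w x; rewrite !mxE perm.permE hgh.
rewrite col_permE det_mulmx det_perm mulrC.
by eexists.
Qed.
Definition zc (c : T) : bool := (tagged c < l)%N && (tag c * l + tagged c < k)%N.

Lemma card_zc : (0 < l)%N -> (k <= m * l)%N -> (k <= #|[pred c | zc c]|)%N.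
Proof.
move=> l0 hk.
have hi : forall w : 'I_k, (w %/ l < m)%N.
  by move=> w; rewrite ltn_divLR // (leq_trans (ltn_ord w)) // mulnC.
have ha : forall w : 'I_k, forall i : 'I_m, (w %% l < l + r i)%N.
  by move=> w i; rewrite (leq_trans (ltn_pmod _ l0)) // leq_addr.
pose e (w : 'I_k) : T := Tagged (fun i : 'I_m => 'I_(l + r i)) (Ordinal (ha w (Ordinal (hi w)))).
have einj : injective e.
  move=> w1 w2 /(congr1 (fun c : T => tag c * l + tagged c)%N) /=.
  by rewrite -!divn_eq => /val_inj.
rewrite -{1}(card_ord k) -(card_imset _ einj); apply: subset_leq_card.
apply/subsetP => c /imsetP [w _ ->]; rewrite inE /zc /= ltn_pmod //=.
by rewrite -divn_eq.
Qed.
Lemma card_Nc (c : T) : (0 < k)%N ->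
  (#|[set S : {set T} | (#|S| == k) && (c \in S)]| <= 'C(#|[set: T]|.-1, k.-1))%N.
Proof.
move=> k0; rewrite cardsT -(cardsC1 c) -cards_draws.
set D := [set S : {set T} | _].
have hinj : {in D &, injective (fun S : {set T} => S :\ c)}.
  move=> S1 S2; rewrite !inE => /andP [_ h1] /andP [_ h2] e.
  by rewrite -(setD1K h1) -(setD1K h2) e.
rewrite -(card_in_imset hinj); apply: subset_leq_card.
apply/subsetP => B /imsetP [S]; rewrite inE => /andP [/eqP hS hc] ->.
rewrite inE; apply/andP; split.
  by apply/subsetP => x; rewrite !inE => /andP [-> _].
by move: hS; rewrite (cardsD1 c S) hc => <-.
Qed.
Lemma sum_bound : (0 < l)%N -> (0 < k)%N -> (k <= m * l)%N ->
  (\sum_(S in Vset) \sum_(c in S) dcol c <=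
     2 * (#|[set: T]| - k) * 'C(#|[set: T]|.-1, k.-1))%N.
Proof.
move=> l0 k0 hk.
apply: (@leq_trans (\sum_(S : {set T} | #|S| == k) \sum_(c in S) dcol c)).
  rewrite [X in (X <= _)%N]big_mkcond [X in (_ <= X)%N]big_mkcond /=.
  apply: leq_sum => S _; rewrite inE; case: (#|S| == k) => //=; case: valid => //.
rewrite (exchange_big_dep xpredT) //=.
set C := 'C(_, _).
apply: (@leq_trans (\sum_c dcol c * C))%N.
  apply: leq_sum => c _.
  rewrite (eq_bigr (fun _ => dcol c * 1)%N); last by move=> *; rewrite muln1.
  rewrite -big_distrr /= sum1_card leq_mul2l; apply/orP; right.
  apply: leq_trans (card_Nc c k0); apply: eq_leq; apply: eq_card => S; by rewrite inE.
rewrite -big_distrl /= leq_mul2r; apply/orP; right.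
rewrite (eq_bigr (fun c => if ~~ zc c then 2 else 0))%N; last first.
  by move=> c _; rewrite /dcol /zc; case: ifP.
rewrite -big_mkcond /= (eq_bigr (fun _ => 2 * 1))%N // -big_distrr /= sum1_card.
rewrite leq_mul2l; apply/orP; right.
have e := cardC [pred c | zc c].
rewrite cardsT -e.
rewrite (_ : #|[predC [pred c | zc c]]| = #|(fun c => ~~ zc c)|); last first.
  by apply: eq_card => c.
by rewrite addnC -addnBA ?card_zc // leq_addr.
Qed.
End Main.

Theorem lemma19 (F : finFieldType) (m s l k : nat) (r : 'I_m -> nat) :
  (2 <= m)%N -> (1 <= s)%N -> (1 <= l)%N -> (forall i, 1 <= r i)%N ->
  k = (m * l - s)%N -> (l <= k)%N ->
  forall p : Pring F k s l r,
    is_lcm (@Tdet F k s l m r) p ->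
    (tdeg p <= 2 * (\sum_(i < m) (l + r i) - k) *
                 'C((\sum_(i < m) (l + r i)).-1, k.-1))%N.
Proof.
move=> hm hs hl hr hk hlk p [hdvd hmin].
have k0 : (0 < k)%N by apply: leq_trans hlk.
have hkml : (k <= m * l)%N by rewrite hk leq_subr.
have m0 : (0 < m)%N by apply: leq_trans hm.
pose i0 : 'I_m := Ordinal m0.
have li0 : (0 < l + r i0)%N by rewrite (leq_trans hl) // leq_addr.
pose c0 : colT l r := Tagged (fun i : 'I_m => 'I_(l + r i)) (Ordinal li0).
have hT : #|[set: colT l r]| = (\sum_(i < m) (l + r i))%N.
  rewrite cardsT card_tagged sumnE big_map big_enum /=.
  by apply: eq_bigr => i _; rewrite card_ord.
rewrite -hT.
have [allnz|] := boolP [forall S in Vset l k r, \det (MS F s k c0 S) != 0]; last first.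
  rewrite negb_forall_in => /existsP [S /andP [hS /negPn /eqP h0]].
  have := hdvd _ (Tdet_gS F s c0 hS); rewrite h0 => [[c ->]].
  by rewrite mul0r tdeg0.
pose pd := \prod_(S in Vset l k r) \det (MS F s k c0 S).
have pdnz : pd != 0.
  by apply/prodf_neq0 => S hS; move/forall_inP: allnz; apply.
have hcm : forall a, Tdet a -> rdvd a pd.
  move=> a /(Tdet_sign c0) [S hS [b ->]].
  exists ((-1) ^+ b * \prod_(S' in Vset l k r | S' != S) \det (MS F s k c0 S')).
  have sq : (-1) ^+ b * (-1) ^+ b = 1 :> Pring F k s l r by rewrite -signr_addb addbb.
  by rewrite /pd (bigD1 S) //= mulrACA sq mul1r.
have [c hc] := hmin _ hcm.
have pnz : p != 0 by apply: contraNneq pdnz; rewrite hc => ->; rewrite mul0r.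
have cnz : c != 0 by apply: contraNneq pdnz; rewrite hc => ->; rewrite mulr0.
apply: (@leq_trans (tdeg pd)).
  by rewrite hc tdegM // leq_addr.
apply: leq_trans (tdeg_prod_le _ _ _) _.
apply: leq_trans (sum_bound r hl k0 hkml).
apply: leq_sum => S; rewrite inE => /andP [/eqP hS _].
exact: tdeg_det.
Qed.
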